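(* Let $k$ be a field of characteristic $0$ and $G \in \{A_4, S_4, A_5\}$. Suppose $\omega_4 \in k$ if $G = A_4$ or $S_4$, and $\omega_5 \in k$ if $G = A_5$. Let $\rho\colon G \hookrightarrow \mathrm{PGL}_2(k)$ be an embedding (unique up to conjugacy). Then the $G$-variety ${}^{\rho}\mathbb{P}^1$ is not strongly incompressible, i.e. there is a non-birational dominant $G$-equivariant morphism ${}^{\rho}\mathbb{P}^1 \to {}^{\rho}\mathbb{P}^1$.
   Context: $\omega_n$ denotes a primitive $n$-th root of unity. ${}^{\rho}\mathbb{P}^1$ is $\mathbb{P}^1$ with the $G$-action induced by $\rho$. A faithful $G$-variety $X$ is strongly incompressible if every dominant $G$-equivariant rational map $X \dashrightarrow Y$ onto a faithful $G$-variety $Y$ is birational. *)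

(* Defs.v *)
From HB Require Import structures.
From mathcomp Require Import all_boot all_order all_algebra all_fingroup all_solvable.
From mathcomp Require Import fraction.
Set Implicit Arguments. Unset Strict Implicit. Unset Printing Implicit Defensive.
Import Order.TTheory GRing.Theory Num.Theory.
Local Open Scope ring_scope.

Section P1.
Variable k : fieldType.

Definition ratfun := {fraction {poly k}}.

Definition polyF (p : {poly k}) : ratfun := tofrac p.

Definition evalF (p : {poly k}) (u : ratfun) : ratfun :=
  (map_poly (fun c : k => polyF c%:P) p).[u].

Definition m00 (A : 'M[k]_2) := A ord0 ord0.
Definition m01 (A : 'M[k]_2) := A ord0 ord_max.
Definition m10 (A : 'M[k]_2) := A ord_max ord0.
Definition m11 (A : 'M[k]_2) := A ord_max ord_max.

Definition mobius (A : 'M[k]_2) : ratfun :=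
  polyF (m00 A *: 'X + (m01 A)%:P) / polyF (m10 A *: 'X + (m11 A)%:P).

(* A morphism P^1 -> P^1, [X:Y] |-> [P(X,Y):Q(X,Y)], is given (in the affine
   coordinate x = X/Y) by the rational function p/q with p, q in k[x] coprime. *)
Definition P1_morphism (p q : {poly k}) : bool :=
  coprimep p q && ((p != 0) || (q != 0)).

(* Its degree. Dominant <-> degree >= 1; birational <-> degree = 1. *)
Definition P1_degree (p q : {poly k}) : nat := (maxn (size p) (size q)).-1.

Definition P1_dominant (p q : {poly k}) : Prop := (1 <= P1_degree p q)%N.
Definition P1_birational (p q : {poly k}) : Prop := P1_degree p q = 1%N.

(* Commutation of f = p/q with the Moebius transformation of A:
   f((a x + b)/(c x + d)) = (a f + b)/(c f + d), written projectively. *)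
Definition commutes_with (A : 'M[k]_2) (p q : {poly k}) : Prop :=
  evalF p (mobius A) * polyF (m10 A *: p + m11 A *: q)
  = evalF q (mobius A) * polyF (m00 A *: p + m01 A *: q).

Definition proj_eq (A B : 'M[k]_2) : Prop := exists2 l : k, l != 0 & A = l *: B.

(* rho : G -> PGL_2(k), given by lifts rho g in GL_2(k), is an injective
   group homomorphism. *)
Definition PGL2_embedding (gT : finGroupType) (G : {group gT})
    (rho : gT -> 'M[k]_2) : Prop :=
  [/\ forall g, g \in G -> rho g \in unitmx,
      forall g h, g \in G -> h \in G -> proj_eq (rho (g * h)%g) (rho g *m rho h)
    & forall g, g \in G -> proj_eq (rho g) 1%:M -> g = 1%g].

Definition equivariant (gT : finGroupType) (G : {group gT})
    (rho : gT -> 'M[k]_2) (p q : {poly k}) : Prop :=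
  forall g, g \in G -> commutes_with (rho g) p q.

End P1.

(* Main.v *)
Require Import Defs.
From HB Require Import structures.
From mathcomp Require Import all_boot all_order all_algebra all_fingroup all_solvable all_field.
From mathcomp Require Import fraction ring zify.
Import Order.TTheory GRing.Theory Num.Theory.
Local Open Scope ring_scope.
Set Implicit Arguments. Unset Strict Implicit. Unset Printing Implicit Defensive.

Section Aux.
Variable k : fieldType.

Lemma evalF_morph (p : {poly k}) u :
  evalF p u = (map_poly (@tofrac {poly k} \o polyC) p).[u].
Proof. by []. Qed.

Lemma evalF_mul (p q : {poly k}) u : evalF (p * q) u = evalF p u * evalF q u.
Proof. by rewrite !evalF_morph rmorphM hornerM. Qed.

Lemma evalF_1 u : evalF (1 : {poly k}) u = 1.
Proof. by rewrite !evalF_morph rmorph1 hornerC. Qed.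

Lemma evalF_lin (a b : k) u :
  evalF (a *: 'X + b%:P) u = polyF a%:P * u + polyF b%:P.
Proof. rewrite !evalF_morph rmorphD /= -mul_polyC rmorphM /= map_polyX !map_polyC /= !hornerE; done. Qed.

Lemma evalF_prod (I : finType) (P : pred I) (F : I -> {poly k}) u :
  evalF (\prod_(i in P) F i) u = \prod_(i in P) evalF (F i) u.
Proof.
by apply: (big_morph (fun p => evalF p u)) => [p q|]; rewrite ?evalF_mul ?evalF_1.
Qed.

Lemma W2 : widen_ord (leqnSn 1) (@ord_max 0) = (@ord0 1).
Proof. exact: val_inj. Qed.

Lemma m00M (A B : 'M[k]_2) : m00 (A *m B) = m00 A * m00 B + m01 A * m10 B.
Proof. by rewrite /m00 /m01 /m10 !mxE !big_ord_recr big_ord0 /= add0r W2. Qed.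
Lemma m01M (A B : 'M[k]_2) : m01 (A *m B) = m00 A * m01 B + m01 A * m11 B.
Proof. by rewrite /m00 /m01 /m11 !mxE !big_ord_recr big_ord0 /= add0r W2. Qed.
Lemma m10M (A B : 'M[k]_2) : m10 (A *m B) = m10 A * m00 B + m11 A * m10 B.
Proof. by rewrite /m00 /m11 /m10 !mxE !big_ord_recr big_ord0 /= add0r W2. Qed.
Lemma m11M (A B : 'M[k]_2) : m11 (A *m B) = m10 A * m01 B + m11 A * m11 B.
Proof. by rewrite /m11 /m01 /m10 !mxE !big_ord_recr big_ord0 /= add0r W2. Qed.

Lemma mx22_eq (A B : 'M[k]_2) : m00 A = m00 B -> m01 A = m01 B ->
  m10 A = m10 B -> m11 A = m11 B -> A = B.
Proof.
move=> h00 h01 h10 h11; apply/matrixP => i j.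
have E (x : 'I_2) : x = ord0 \/ x = ord_max.
  case: x => [[|[|n]] Hx]; [left|right|by []]; exact: val_inj.
by case: (E i) => ->; case: (E j) => ->.
Qed.

End Aux.

Section Hom.
Variable k : fieldType.
Variables (u w : {poly k}).

Definition hom n (P : {poly k}) :=
  \sum_(i < n.+1) (P`_i)%:P * u ^+ i * w ^+ (n - i).

Lemma evalF_hom n (P : {poly k}) : (size P <= n.+1)%N -> w != 0 ->
  evalF P (polyF u / polyF w) * polyF w ^+ n = polyF (hom n P).
Proof.
move=> sP w0.
rewrite evalF_morph (horner_coef_wide _ (_ : size _ <= n.+1)%N); last by rewrite size_map_poly.
rewrite mulr_suml /polyF /hom rmorph_sum; apply: eq_bigr => i _.
rewrite coef_map_id0 /=; last by rewrite rmorph0.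
have wn0 : tofrac w != 0 by rewrite tofrac_eq0.
rewrite !tofracM !tofracXn.
have hi : (i <= n)%N by rewrite -ltnS.
move: (tofrac w) wn0 (tofrac u) (nat_of_ord i) hi => W hW U j hj.
rewrite -(subnKC hj) exprD expr_div_n addKn -!mulrA mulKf; first by [].
exact: expf_neq0.
Qed.

Definition T1 n (P : {poly k}) :=
  \sum_(i < n.+2) (P`_i)%:P * i%:R * u ^+ i.-1 * w ^+ (n.+1 - i).
Definition T2 n (P : {poly k}) :=
  \sum_(i < n.+2) (P`_i)%:P * (n.+1 - i)%:R * u ^+ i * w ^+ (n - i).

Lemma deriv_hom (a c : k) n (P : {poly k}) : u^`() = a%:P -> w^`() = c%:P ->
  (hom n.+1 P)^`() = a%:P * T1 n P + c%:P * T2 n P.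
Proof.
move=> du dw; rewrite /hom /T1 /T2 raddf_sum !mulr_sumr -big_split /=.
apply: eq_bigr => i _.
case: i => j hj /=.
rewrite !derivM !deriv_exp du dw derivC.
have -> : (n.+1 - j).-1 = (n - j)%N by lia.
move: (u ^+ j) (u ^+ j.-1) (w ^+ (n.+1 - j)) (w ^+ (n - j)) ((P`_j)%:P) (a%:P) (c%:P) (n.+1 - j)%N => U1 U2 W1 W2 Q A C l.
ring.
Qed.
Lemma euler_hom n (P : {poly k}) :
  u * T1 n P + w * T2 n P = n.+1%:R * hom n.+1 P.
Proof.
rewrite /hom /T1 /T2 !mulr_sumr -big_split /=.
apply: eq_bigr; case=> j hj _ /=.
have hU : j%:R * u ^+ j.-1 * u = j%:R * u ^+ j :> {poly k}.
  by case: j hj => [|j] hj; rewrite ?mul0r //= -mulrA -exprSr.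
have hW : (n.+1 - j)%:R * w ^+ (n - j) * w = (n.+1 - j)%:R * w ^+ (n.+1 - j) :> {poly k}.
  case: (leqP j n) => hi.
    by rewrite -mulrA -exprSr (subSn hi).
  have -> : (n.+1 - j)%N = 0%N by lia.
  by rewrite !mul0r.
have hS : j%:R + (n.+1 - j)%:R = n.+1%:R :> {poly k}.
  by rewrite -natrD subnKC // -ltnS.
rewrite -hS.
transitivity ((P`_j)%:P * (j%:R * u ^+ j.-1 * u) * w ^+ (n.+1 - j)
   + (P`_j)%:P * u ^+ j * ((n.+1 - j)%:R * w ^+ (n - j) * w)).
  move: (u ^+ j) (u ^+ j.-1) (w ^+ (n.+1 - j)) (w ^+ (n - j)) ((P`_j)%:P) (j%:R : {poly k}) ((n.+1 - j)%:R : {poly k}) => U1 U2 W1 W2 Q A C.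
  ring.
rewrite hU hW.
move: (u ^+ j) (w ^+ (n.+1 - j)) ((P`_j)%:P) (j%:R : {poly k}) ((n.+1 - j)%:R : {poly k}) => U1 W1 Q A C.
ring.
Qed.

Lemma T1_hom n (P : {poly k}) : T1 n P = hom n P^`().
Proof.
rewrite /T1 /hom big_ord_recl /= mulr0 !mul0r add0r.
apply: eq_bigr => i _; rewrite /bump /= add1n subSS coef_deriv polyCMn.
by rewrite mulr_natr.
Qed.

Lemma T2_hom n (P : {poly k}) : T2 n P = hom n (P *+ n.+1 - 'X * P^`()).
Proof.
rewrite /T2 /hom big_ord_recr /= subnn mulr0 !mul0r addr0.
apply: eq_bigr; case=> j hj _ /=; rewrite coefB coefMn coefXM coef_deriv.
congr (_ * _ * _).
have hj' : (j <= n.+1)%N by apply: leqW; rewrite -ltnS.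
case: j hj hj' => [|j] _ hj /=.
  by rewrite subr0 subn0 polyCMn mulr_natr.
by rewrite polyCB !polyCMn mulr_natr mulrnBr.
Qed.

End Hom.

Section Mat.
Variable k : fieldType.

Definition dt (A : 'M[k]_2) := m00 A * m11 A - m01 A * m10 A.

Lemma m1 : (m00 (1%:M : 'M[k]_2) = 1) * (m01 (1%:M : 'M[k]_2) = 0)
  * (m10 (1%:M : 'M[k]_2) = 0) * (m11 (1%:M : 'M[k]_2) = 1).
Proof. by rewrite /m00 /m01 /m10 /m11 !mxE. Qed.

Lemma dt_unit (A : 'M[k]_2) : A \in unitmx -> dt A != 0.
Proof.
move=> uA; have E := mulmxV uA; move: (invmx A) E => B E.
have e00 : m00 A * m00 B + m01 A * m10 B = 1 by rewrite -m00M E m1.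
have e01 : m00 A * m01 B + m01 A * m11 B = 0 by rewrite -m01M E m1.
have e10 : m10 A * m00 B + m11 A * m10 B = 0 by rewrite -m10M E m1.
have e11 : m10 A * m01 B + m11 A * m11 B = 1 by rewrite -m11M E m1.
have : dt A * dt B = 1.
  rewrite /dt; transitivity ((m00 A * m00 B + m01 A * m10 B) * (m10 A * m01 B + m11 A * m11 B)
    - (m00 A * m01 B + m01 A * m11 B) * (m10 A * m00 B + m11 A * m10 B)); first by ring.
  by rewrite e00 e01 e10 e11 mulr0 subr0 mulr1.
move=> H; apply/eqP => h0; move: H; rewrite h0 mul0r => /eqP; by rewrite eq_sym oner_eq0.
Qed.

Lemma dtZ l (A : 'M[k]_2) : dt (l *: A) = l ^+ 2 * dt A.
Proof. rewrite /dt /m00 /m01 /m10 /m11 !mxE; ring. Qed.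

Lemma prop_of_coefs (X Y : 'M[k]_2) :
  dt X != 0 ->
  m01 X * m00 Y - m01 Y * m00 X = 0 ->
  m01 X * m10 Y + m11 X * m00 Y - m01 Y * m10 X - m11 Y * m00 X = 0 ->
  m11 X * m10 Y - m11 Y * m10 X = 0 ->
  Y = ((m00 X * m11 Y - m01 X * m10 Y) / dt X) *: X.
Proof.
move=> D0; set a := m00 X; set b := m01 X; set c := m10 X; set d := m11 X.
set e := m00 Y; set f := m01 Y; set g := m10 Y; set h := m11 Y.
set D := dt X; move=> k2 k1 k0.
have key (x y : k) : x * D = (a * h - b * g) * y -> x = (a * h - b * g) / D * y.
  by move=> H; rewrite mulrAC -H mulfK.
have E1 : e = (a * h - b * g) / D * a.
  apply: key; apply/eqP; rewrite -subr_eq0; apply/eqP.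
  transitivity (c * (- (b * e - f * a)) - a * (- (b * g + d * e - f * c - h * a))).
    by rewrite /D /dt -/a -/b -/c -/d; ring.
  by rewrite k2 k1; ring.
have E2 : f = (a * h - b * g) / D * b.
  apply: key; apply/eqP; rewrite -subr_eq0; apply/eqP.
  transitivity (d * (- (b * e - f * a)) + b * (b * g + d * e - f * c - h * a)).
    by rewrite /D /dt -/a -/b -/c -/d; ring.
  by rewrite k2 k1; ring.
have E3 : g = (a * h - b * g) / D * c.
  apply: key; apply/eqP; rewrite -subr_eq0; apply/eqP.
  transitivity (a * (d * g - h * c)).
    by rewrite /D /dt -/a -/b -/c -/d; ring.
  by rewrite k0; ring.
have E4 : h = (a * h - b * g) / D * d.
  apply: key; apply/eqP; rewrite -subr_eq0; apply/eqP.
  transitivity (b * (d * g - h * c)).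
    by rewrite /D /dt -/a -/b -/c -/d; ring.
  by rewrite k0; ring.
by apply: mx22_eq; rewrite /m00 /m01 /m10 /m11 mxE; [exact E1|exact E2|exact E3|exact E4].
Qed.

End Mat.

Section Core.
Variable k : fieldType.

Definition uA (A : 'M[k]_2) : {poly k} := m00 A *: 'X + (m01 A)%:P.
Definition wA (A : 'M[k]_2) : {poly k} := m10 A *: 'X + (m11 A)%:P.

Lemma mobiusE (A : 'M[k]_2) : mobius A = polyF (uA A) / polyF (wA A).
Proof. by []. Qed.

Lemma deriv_lin (a b : k) : (a *: 'X + b%:P)^`() = a%:P.
Proof. by rewrite derivD derivZ derivX derivC addr0 alg_polyC. Qed.

Lemma wA_neq0 (A : 'M[k]_2) : dt A != 0 -> wA A != 0.
Proof.
apply: contra => /eqP E.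
have h1 : m10 A = 0 by move: (congr1 (fun p : {poly k} => p`_1) E); rewrite /wA !coefE /= mulr1 addr0.
have h0 : m11 A = 0 by move: (congr1 (fun p : {poly k} => p`_0) E); rewrite /wA !coefE /= mulr0 add0r.
by rewrite /dt h1 h0 !mulr0 subr0.
Qed.

Lemma evalFN (p : {poly k}) u : evalF (- p) u = - evalF p u.
Proof. by rewrite !evalF_morph rmorphN hornerN. Qed.

Lemma size_deriv_le (p : {poly k}) : (size p^`() <= (size p).-1)%N.
Proof.
have [->|p0] := eqVneq p 0; first by rewrite deriv0 size_poly0.
by rewrite -ltnS prednK ?lt_size_deriv // size_poly_gt0.
Qed.

Lemma commute_core (F : {poly k}) n (A : 'M[k]_2) (C : k) :
  dt A != 0 -> C != 0 -> (size F <= n.+2)%N ->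
  hom (uA A) (wA A) n.+1 F = C%:P * F ->
  commutes_with A (- (F *+ n.+1 - 'X * F^`())) F^`().
Proof.
move=> D0 C0 sF hF.
set q := F^`(); set P2 := F *+ n.+1 - 'X * q.
set u := uA A; set w := wA A.
have w0 : w != 0 by exact: wA_neq0.
have Wn0 : polyF w != 0 by rewrite /polyF tofrac_eq0.
have sq : (size q <= n.+1)%N.
  by apply: leq_trans (size_deriv_le F) _; rewrite -ltnS; case: (size F) sF.
have sP2 : (size P2 <= n.+1)%N.
  apply/leq_sizeP => j hj; rewrite /P2 coefB coefMn coefXM /q coef_deriv.
  case: j hj => [|j] hj //.
  rewrite /=; have [->|hj'] := eqVneq j n.
    by rewrite subrr.
  have hF0 : F`_j.+1 = 0.
    by apply/(leq_sizeP _ _ sF); rewrite ltn_neqAle eq_sym hj' -ltnS.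
  by rewrite hF0 !mul0rn subr0.
have E1 : evalF q (mobius A) * polyF w ^+ n = polyF (hom u w n q).
  by rewrite mobiusE evalF_hom.
have E2 : evalF P2 (mobius A) * polyF w ^+ n = polyF (hom u w n P2).
  by rewrite mobiusE evalF_hom.
have i1 : (m00 A)%:P * hom u w n q + (m10 A)%:P * hom u w n P2 = C%:P * q.
  rewrite -T1_hom -T2_hom -(@deriv_hom _ u w (m00 A) (m10 A)) ?deriv_lin // hF.
  by rewrite derivM derivC mul0r add0r.
have i2 : u * hom u w n q + w * hom u w n P2 = n.+1%:R * (C%:P * F).
  by rewrite -T1_hom -T2_hom euler_hom hF.
rewrite /commutes_with.
apply: (mulIf (expf_neq0 n Wn0)).
rewrite !(mulrAC _ (polyF _)) evalFN mulNr E1 E2.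
rewrite /polyF -tofracN -!tofracM; apply/eqP; rewrite tofrac_eq; apply/eqP.
move: i1 i2; set T1 := hom u w n q; set T2 := hom u w n P2 => i1 i2.
have e2 : C%:P * P2 = u * T1 + w * T2 - 'X * ((m00 A)%:P * T1 + (m10 A)%:P * T2).
  rewrite i1 i2 /P2 -mulr_natl; ring.
apply: (mulfI (_ : C%:P != 0)); first by rewrite polyC_eq0.
transitivity (- T2 * (- (m10 A)%:P * (C%:P * P2) + (m11 A)%:P * (C%:P * q))).
  by rewrite -!mul_polyC; ring.
transitivity (T1 * (- (m00 A)%:P * (C%:P * P2) + (m01 A)%:P * (C%:P * q))); last first.
  by rewrite -!mul_polyC; ring.
rewrite -i1 e2 /u /w /uA /wA -!mul_polyC; ring.
Qed.

End Core.

Section Choose.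
Variable k : fieldType.
Hypothesis Hc : [pchar k] =i pred0.

Lemma natr_inj_k : injective (fun n : nat => n%:R : k).
Proof.
have H := (pcharf0P k).1 Hc.
move=> i j /= E.
wlog le : i j E / (i <= j)%N.
  move=> W; case: (leqP i j) => h; first exact: W.
  by symmetry; apply: W => //; exact: ltnW.
have : (j - i)%:R == 0 :> k by rewrite natrB // E subrr.
rewrite H subn_eq0 => hji; apply/eqP; by rewrite eqn_leq le hji.
Qed.

Lemma exists_nonroot (P : {poly k}) : P != 0 -> exists s, ~~ root P s.
Proof.
move=> P0; set rs := [seq i%:R | i <- iota 0 (size P)] : seq k.
have urs : uniq rs by rewrite (map_inj_uniq natr_inj_k) iota_uniq.
case: (boolP (all (root P) rs)) => [hall|].
  by have := max_poly_roots P0 hall urs; rewrite size_map size_iota ltnn.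
by case/allPn => x _ hx; exists x.
Qed.

End Choose.

Section Main.
Variables (k : fieldType) (gT : finGroupType) (G : {group gT}) (rho : gT -> 'M[k]_2).
Hypothesis Hc : [pchar k] =i pred0.
Hypothesis Hemb : PGL2_embedding G rho.

Lemma rho_unit g : g \in G -> rho g \in unitmx.
Proof. by case: Hemb => H _ _; exact: H. Qed.
Lemma rho_hom g h : g \in G -> h \in G -> proj_eq (rho (g * h)%g) (rho g *m rho h).
Proof. by case: Hemb => _ H _; exact: H. Qed.
Lemma rho_inj g : g \in G -> proj_eq (rho g) 1%:M -> g = 1%g.
Proof. by case: Hemb => _ _ H; exact: H. Qed.
Lemma dt_rho g : g \in G -> dt (rho g) != 0.
Proof. by move=> Gg; apply: dt_unit; apply: rho_unit. Qed.

Definition alphaP (X : 'M[k]_2) : {poly k} := m00 X *: 'X + (m10 X)%:P.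
Definition betaP (X : 'M[k]_2) : {poly k} := m01 X *: 'X + (m11 X)%:P.
Definition PP X Y := betaP X * alphaP Y - betaP Y * alphaP X.

Lemma alphaP_neq0 X : dt X != 0 -> alphaP X != 0.
Proof.
apply: contra => /eqP E.
have h1 : m00 X = 0 by move: (congr1 (fun p : {poly k} => p`_1) E); rewrite /alphaP !coefE /= mulr1 addr0.
have h0 : m10 X = 0 by move: (congr1 (fun p : {poly k} => p`_0) E); rewrite /alphaP !coefE /= mulr0 add0r.
by rewrite /dt h1 h0 !mul0r mulr0 subr0.
Qed.

Lemma PP_expand X Y : PP X Y =
  (m01 X * m00 Y - m01 Y * m00 X)%:P * 'X^2
  + (m01 X * m10 Y + m11 X * m00 Y - m01 Y * m10 X - m11 Y * m00 X)%:P * 'X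
  + (m11 X * m10 Y - m11 Y * m10 X)%:P.
Proof. rewrite /PP /alphaP /betaP -!mul_polyC !polyCB !polyCD !polyCM; ring. Qed.

Lemma PP_neq0 g h : g \in G -> h \in G -> g != h -> PP (rho g) (rho h) != 0.
Proof.
move=> Gg Gh ngh; apply/negP => /eqP E.
have c i : (PP (rho g) (rho h))`_i = 0 by rewrite E coef0.
have k2 := c 2%N; have k1 := c 1%N; have k0 := c 0%N.
rewrite PP_expand !coefE /= !mulr1 !mulr0 !addr0 ?add0r in k2 k1 k0.
have YX := prop_of_coefs (dt_rho Gg) k2 k1 k0.
move: YX; set lam := (_ / dt _) => YX.
have lam0 : lam != 0.
  apply: contraNneq (dt_rho Gh) => l0.
  by rewrite YX l0 dtZ expr0n /= mul0r.
have Ghg : (h * g^-1)%g \in G by rewrite groupM ?groupV.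
have [l l0 Yl] := rho_hom Ghg Gg; rewrite mulgKV in Yl.
have uX := rho_unit Gg.
have e : rho (h * g^-1)%g *m rho g = (lam / l) *: rho g.
  apply: (scalerI l0); rewrite -Yl YX scalerA (mulrC l) divfK //.
have Z1 : rho (h * g^-1)%g = (lam / l) *: 1%:M.
  have := mulmxK uX (rho (h * g^-1)%g); rewrite /= e -scalemxAl mulmxV //.
have h1 := rho_inj Ghg (ex_intro2 _ _ (lam / l) (mulf_neq0 lam0 (invr_neq0 l0)) Z1).
move: ngh; rewrite eq_sym eq_mulgV1 h1 eqxx.
by move/negP; apply.
Qed.

Lemma choose_s : exists s,
  (forall g, g \in G -> (alphaP (rho g)).[s] != 0) /\
  (forall g h, g \in G -> h \in G -> g != h -> (PP (rho g) (rho h)).[s] != 0).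
Proof.
set Pi := \prod_(g in G) alphaP (rho g) *
          \prod_(g in G) \prod_(h in G | h != g) PP (rho g) (rho h).
have Pi0 : Pi != 0.
  rewrite mulf_neq0 //; apply/prodf_neq0 => g Gg; first exact: alphaP_neq0 (dt_rho Gg).
  apply/prodf_neq0 => h /andP[Gh hg]; apply: PP_neq0 => //; by rewrite eq_sym.
have [s hs] := exists_nonroot Hc Pi0.
exists s; move: hs; rewrite /root hornerM mulf_eq0 negb_or => /andP[h1 h2].
split.
  by move=> g Gg; move: h1; rewrite horner_prod => /prodf_neq0; apply.
move=> g h Gg Gh gh; move: h2; rewrite horner_prod => /prodf_neq0 /(_ g Gg).
by rewrite horner_prod => /prodf_neq0; apply; rewrite Gh eq_sym.
Qed.

Definition Lp (s : k) (X : 'M[k]_2) : {poly k} :=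
  (m00 X * s + m10 X) *: 'X + (m01 X * s + m11 X)%:P.

Lemma Lp_mob s X A : dt A != 0 ->
  evalF (Lp s X) (mobius A) * polyF (wA A) = polyF (Lp s (X *m A)).
Proof.
move=> D0; have w0 := wA_neq0 D0.
have W0 : polyF (wA A) != 0 by rewrite /polyF tofrac_eq0.
rewrite /Lp evalF_lin mobiusE mulrDl -mulrA divfK; last exact: W0.
rewrite /polyF -!tofracM -tofracD; congr tofrac.
rewrite m00M m10M m01M m11M /uA /wA -!mul_polyC !polyCD !polyCM; ring.
Qed.

Lemma Lp_scale s l X : Lp s (l *: X) = l%:P * Lp s X.
Proof. rewrite /Lp /m00 /m01 /m10 /m11 !mxE -!mul_polyC !polyCD !polyCM; ring. Qed.

Lemma prod_scal (I : finType) (P : pred I) (F1 F2 : I -> ratfun k) :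
  (forall i, P i -> exists2 c : k, c != 0 & F1 i = polyF c%:P * F2 i) ->
  exists2 C : k, C != 0 & \prod_(i | P i) F1 i = polyF C%:P * \prod_(i | P i) F2 i.
Proof.
move=> H; elim/big_rec2: _.
  by exists 1; rewrite ?oner_eq0 // /polyF polyC1 tofrac1 mul1r.
move=> i y1 y2 Pi [C C0 ->]; have [c c0 ->] := H i Pi.
exists (c * C); first by rewrite mulf_neq0.
rewrite polyCM /polyF tofracM -!mulrA; congr (_ * _); exact: mulrCA.
Qed.

Definition FF s := \prod_(g in G) Lp s (rho g).

Lemma FF_inv s h : h \in G -> exists2 C : k, C != 0 &
  evalF (FF s) (mobius (rho h)) * polyF (wA (rho h)) ^+ #|G| = polyF (C%:P * FF s).
Proof.
move=> Gh; have D0 := dt_rho Gh.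
rewrite /FF evalF_prod -prodr_const -big_split /=.
rewrite (eq_bigr (fun g => polyF (Lp s (rho g *m rho h)))); last first.
  by move=> g _; rewrite Lp_mob.
have [C C0 ->] : exists2 C : k, C != 0 &
    \prod_(g in G) polyF (Lp s (rho g *m rho h))
    = polyF C%:P * \prod_(g in G) polyF (Lp s (rho (g * h)%g)).
  apply: prod_scal => g Gg.
  have [l l0 El] := rho_hom Gg Gh.
  exists l^-1; first by rewrite invr_eq0.
  rewrite El Lp_scale /polyF -tofracM mulrA -polyCM mulVf // polyC1 mul1r.
  by [].
exists C; first exact: C0.
have -> : \prod_(g in G) polyF (Lp s (rho (g * h)%g)) = \prod_(g in G) polyF (Lp s (rho g)).
  symmetry; apply: (reindex_astabs 'R (F := fun g => polyF (Lp s (rho g))) h).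
  by rewrite astabsR.
by rewrite /polyF -rmorph_prod -tofracM.
Qed.

Definition rt s g := - ((betaP (rho g)).[s] / (alphaP (rho g)).[s]).

Lemma FF_factor s : (forall g, g \in G -> (alphaP (rho g)).[s] != 0) ->
  FF s = (\prod_(g in G) (alphaP (rho g)).[s]) *:
         \prod_(x <- [seq rt s g | g <- enum G]) ('X - x%:P).
Proof.
move=> hA; rewrite big_map big_enum /= -scaler_prod /FF.
apply: eq_bigr => g Gg; have a0 := hA g Gg.
rewrite /Lp /rt scalerBr scale_polyC mulrN polyCN opprK (mulrC (alphaP _).[s]) divfK //.
by rewrite /alphaP /betaP !hornerE.
Qed.

Lemma main_section : (3 <= #|G|)%N -> exists p q : {poly k},
  [/\ P1_morphism p q, equivariant G rho p q, P1_dominant p q & ~ P1_birational p q].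
Proof.
move=> cG.
have [s [hA hP]] := choose_s.
have FE := FF_factor hA.
move: FE; set LC := \prod_(g in G) _; set rs := [seq rt s g | g <- enum G]; set F := FF s => FE.
have LC0 : LC != 0 by apply/prodf_neq0.
have urs : uniq rs.
  rewrite map_inj_in_uniq ?enum_uniq // => g h; rewrite !mem_enum => Gg Gh E.
  apply/eqP/negPn/negP => ngh; have := hP g h Gg Gh ngh.
  have ag := hA g Gg; have ah := hA h Gh.
  move: E; rewrite /rt => /oppr_inj E.
  have e : (betaP (rho g)).[s] * (alphaP (rho h)).[s] = (betaP (rho h)).[s] * (alphaP (rho g)).[s].
    by rewrite -(divfK ag (betaP (rho g)).[s]) E mulrAC divfK.
  by rewrite /PP hornerD hornerN !hornerM e subrr eqxx.
set n := #|G|.-1.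
have hn : #|G| = n.+1 by rewrite /n prednK // (leq_trans _ cG).
have sF : size F = n.+2 by rewrite FE size_scale // size_prod_XsubC size_map -cardE hn.
have HC := (pcharf0P k).1 Hc.
set q := F^`(); set P2 := F *+ n.+1 - 'X * q.
have sq : size q = n.+1.
  have le : (size q <= n.+1)%N by apply: leq_trans (size_deriv_le F) _; rewrite sF.
  have cq : q`_n != 0.
    rewrite /q coef_deriv -mulr_natr mulf_neq0 //; last by rewrite HC.
    have -> : F`_n.+1 = lead_coef F by rewrite lead_coefE sF.
    by rewrite lead_coef_eq0 -size_poly_gt0 sF.
  apply/eqP; rewrite eqn_leq le /= ltnNge; apply/negP => /leq_sizeP /(_ n (leqnn n)) /eqP.
  by rewrite (negbTE cq).
have sP2 : (size P2 <= n.+1)%N.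
  apply/leq_sizeP => j hj; rewrite /P2 coefB coefMn coefXM /q coef_deriv.
  case: j hj => [|j] hj //.
  rewrite /=; have [->|hj'] := eqVneq j n.
    by rewrite subrr.
  have hF0 : F`_j.+1 = 0.
    by apply/(leq_sizeP _ _ (eq_leq sF)); rewrite ltn_neqAle eq_sym hj' -ltnS.
  by rewrite hF0 !mul0rn subr0.
exists (- P2), q; split.
- rewrite /P1_morphism; apply/andP; split; last by rewrite -(size_poly_gt0 q) sq orbT.
  rewrite coprimep_sym /P2 opprB coprimep_addl_mul.
  rewrite -scaler_nat -scaleNr coprimepZr; last by rewrite oppr_eq0 HC.
  rewrite coprimep_sym /q FE derivZ coprimepZl // coprimepZr //.
  by move: (separable_prod_XsubC rs); rewrite urs unlock.
- move=> h Gh; have [C C0 hC] := FF_inv s Gh.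
  have D0 := dt_rho Gh.
  apply: (commute_core (C := C)) => //; first by rewrite sF.
  have e1 := @evalF_hom k (uA (rho h)) (wA (rho h)) n.+1 F (eq_leq sF) (wA_neq0 D0).
  rewrite hn in hC; rewrite -mobiusE hC /polyF in e1.
  by apply/eqP; rewrite -tofrac_eq -e1.
- rewrite /P1_dominant /P1_degree size_polyN (maxn_idPr _) sq //=.
  by rewrite -ltnS -hn (leq_trans _ cG).
- rewrite /P1_birational /P1_degree size_polyN (maxn_idPr _) sq //= => n1.
  by move: cG; rewrite hn n1.
Qed.

End Main.

Theorem lemma9p7 (k : fieldType) (gT : finGroupType) (G : {group gT})
    (rho : gT -> 'M[k]_2) :
  [pchar k] =i pred0 ->
  ((G \isog 'Alt_('I_4)) /\ (exists w : k, 4.-primitive_root w)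
   \/ (G \isog 'Sym_('I_4)) /\ (exists w : k, 4.-primitive_root w)
   \/ (G \isog 'Alt_('I_5)) /\ (exists w : k, 5.-primitive_root w)) ->
  PGL2_embedding G rho ->
  exists p q : {poly k},
    [/\ P1_morphism p q, equivariant G rho p q,
        P1_dominant p q & ~ P1_birational p q].
Proof.
move=> Hc HG Hemb.
apply: (main_section Hc Hemb).
case: HG => [[iso _]|[[iso _]|[iso _]]]; rewrite (card_isog iso).
- have := card_Alt (T := 'I_4); rewrite card_ord => /(_ isT) h.
  have e : 4`! = 24 by []. rewrite e in h.
  have -> : #|('Alt_('I_4))%G| = #|('Alt_('I_4))%g| by []. lia.
- by rewrite card_Sym card_ord.
- have := card_Alt (T := 'I_5); rewrite card_ord => /(_ isT) h.
  have e : 5`! = 120 by []. rewrite e in h.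
  have -> : #|('Alt_('I_5))%G| = #|('Alt_('I_5))%g| by []. lia.
Qed.
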